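(* Under Yalcin's semantics, the following formulas are valid for all formulas $\varphi,\alpha,\beta$ of $\mathcal{L}(\Rightarrow)$ and every nonmodal formula $\pi$: A1: $(\varphi\Rightarrow\pi)\leftrightarrow\Box(\varphi\to\pi)$; A2: $(\varphi\Rightarrow(\alpha\wedge\beta))\leftrightarrow((\varphi\Rightarrow\alpha)\wedge(\varphi\Rightarrow\beta))$; A3: $(\varphi\Rightarrow(\alpha\vee\Box\beta))\leftrightarrow((\varphi\Rightarrow\alpha)\vee(\varphi\Rightarrow\beta))$; A4: $(\varphi\Rightarrow(\alpha\vee\Diamond\beta))\leftrightarrow((\varphi\Rightarrow\alpha)\vee\neg(\varphi\Rightarrow\neg\beta))$.
   Context: The language $\mathcal{L}(\Rightarrow)$ is given by $\varphi::= p\mid \neg\varphi\mid (\varphi\wedge\varphi)\mid \Box\varphi \mid (\varphi\Rightarrow\varphi)$, with $p$ ranging over a fixed set of propositional variables; $\vee,\to,\leftrightarrow,\bot$ as usual and $\Diamond\varphi:=\neg\Box\neg\varphi$. A formula is nonmodal if it contains neither $\Rightarrow$ nor $\Box$. A model is $\mathcal{M}=\langle W,V\rangle$ with $W$ nonempty and $V$ assigning each propositional variable a subset of $W$. Yalcin's semantics: for $w\in W$, $X\subseteq W$: $\mathcal{M},w,X\vDash p$ iff $w\in V(p)$; $\neg,\wedge$ Boolean; $\mathcal{M},w,X\vDash\Box\varphi$ iff $\mathcal{M},v,X\vDash\varphi$ for all $v\in X$; $\mathcal{M},w,X\vDash\varphi\Rightarrow\psi$ iff $\mathcal{M},w,\llbracket\varphi\rrbracket^{\mathcal{M},X}\vDash\Box\psi$,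 where $\llbracket\varphi\rrbracket^{\mathcal{M},X}=\{v\in X\mid\mathcal{M},v,X\vDash\varphi\}$. A formula is valid iff it is true at every $w\in W$ relative to every $X\subseteq W$ in every model. *)

(* Defs.v *)
Set Implicit Arguments.

Inductive form (A : Type) : Type :=
| Var : A -> form A
| Neg : form A -> form A
| And : form A -> form A -> form A
| Box : form A -> form A
| Cond : form A -> form A -> form A.

Arguments Var {A}. Arguments Neg {A}. Arguments And {A}.
Arguments Box {A}. Arguments Cond {A}.

Definition Or {A} (p q : form A) : form A := Neg (And (Neg p) (Neg q)).
Definition Imp {A} (p q : form A) : form A := Neg (And p (Neg q)).
Definition Iff {A} (p q : form A) : form A := And (Imp p q) (Imp q p).
Definition Dia {A} (p : form A) : form A := Neg (Box (Neg p)).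

Fixpoint nonmodal {A} (p : form A) : Prop :=
  match p with
  | Var _ => True
  | Neg q => nonmodal q
  | And q r => nonmodal q /\ nonmodal r
  | Box _ => False
  | Cond _ _ => False
  end.

(* A model is a set of worlds W (a type) with valuation V; information
   states X are subsets of W (predicates). *)
Fixpoint sat {A} {W : Type} (V : A -> W -> Prop) (w : W) (X : W -> Prop)
  (p : form A) : Prop :=
  match p with
  | Var a => V a w
  | Neg q => ~ sat V w X q
  | And q r => sat V w X q /\ sat V w X r
  | Box q => forall v, X v -> sat V v X q
  | Cond q r =>
      (* M,w,[[q]]^{M,X} |= Box r *)
      let Xq := fun v => X v /\ sat V v X q in
      forall v, Xq v -> sat V v Xq r
  end.

Definition valid {A} (p : form A) : Prop :=
  forall (W : Type) (V : A -> W -> Prop), inhabited W ->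
  forall (w : W) (X : W -> Prop), sat V w X p.

(* Main.v *)
Require Import Defs.
From Stdlib Require Import Classical.

Lemma nonmodal_indep {A W} (V : A -> W -> Prop) (p : form A) :
  nonmodal p -> forall w X Y, sat V w X p <-> sat V w Y p.
Proof.
  induction p; simpl; intros H w X Y; try tauto.
  - specialize (IHp H w X Y); tauto.
  - destruct H as [H1 H2]; specialize (IHp1 H1 w X Y); specialize (IHp2 H2 w X Y); tauto.
Qed.

Lemma sat_Iff {A W} (V : A -> W -> Prop) w X (p q : form A) :
  (sat V w X p <-> sat V w X q) -> sat V w X (Iff p q).
Proof. unfold Iff, Imp; simpl; tauto. Qed.

Lemma sat_Or {A W} (V : A -> W -> Prop) w X (p q : form A) :
  sat V w X (Or p q) <-> (sat V w X p \/ sat V w X q).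
Proof. unfold Or; simpl. destruct (classic (sat V w X p)); tauto. Qed.

Lemma sat_Imp {A W} (V : A -> W -> Prop) w X (p q : form A) :
  sat V w X (Imp p q) <-> (sat V w X p -> sat V w X q).
Proof. unfold Imp; simpl. destruct (classic (sat V w X q)); tauto. Qed.

Theorem lemma3 (A : Type) (phi alpha beta pi : form A) :
  (nonmodal pi -> valid (Iff (Cond phi pi) (Box (Imp phi pi)))) /\
  valid (Iff (Cond phi (And alpha beta)) (And (Cond phi alpha) (Cond phi beta))) /\
  valid (Iff (Cond phi (Or alpha (Box beta))) (Or (Cond phi alpha) (Cond phi beta))) /\
  valid (Iff (Cond phi (Or alpha (Dia beta)))
             (Or (Cond phi alpha) (Neg (Cond phi (Neg beta))))).
Proof.
  unfold valid; split; [|split; [|split]]; intros; apply sat_Iff.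
  - cbn [sat]. split.
    + intros H1 v Xv. apply sat_Imp. intros Pv.
      eapply nonmodal_indep; [exact H|]. apply H1; eauto.
    + intros H1 v [Xv Pv]. specialize (H1 v Xv). rewrite sat_Imp in H1.
      eapply nonmodal_indep; [exact H|]. apply H1; exact Pv.
  - cbn [sat]. split.
    + intros H1. split; intros v Hv; apply (H1 v Hv).
    + intros [H1 H2] v Hv; split; auto.
  - rewrite sat_Or. cbn [sat]. split.
    + intros H1. destruct (classic (forall v, (X v /\ sat V v X phi) ->
         sat V v (fun v => X v /\ sat V v X phi) beta)) as [Hb|Hb]; [right|left].
      * intros v Hv. apply Hb; exact Hv.
      * intros v Hv. specialize (H1 v Hv). rewrite sat_Or in H1. cbn [sat] in H1. tauto.
    + intros [H1|H1] v Hv; rewrite sat_Or; cbn [sat]; [left; auto|right; auto].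
  - rewrite sat_Or. cbn [sat]. split.
    + intros H1. destruct (classic (forall v, (X v /\ sat V v X phi) ->
         ~ sat V v (fun v => X v /\ sat V v X phi) beta)) as [Hb|Hb]; [left|right].
      * intros v Hv. specialize (H1 v Hv). rewrite sat_Or in H1. cbn [sat] in H1.
        destruct H1 as [H1|H1]; [exact H1|]. exfalso. apply H1. exact Hb.
      * exact Hb.
    + intros [H1|H1] v Hv; rewrite sat_Or; cbn [sat]; [left; auto|right; auto].
Qed.
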